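(* Let $d\geq 3$. Let $G$ be a finite $C_4$-free bipartite graph with vertex classes $A$ and $B$. Suppose $A$ has a partition $A=A_1\cup\dots\cup A_m$ with $|A_i|\leq d^2$ for each $i\in[m]$, and suppose that for all $b\in B$ and $i\in[m]$ we have either $|N(b)\cap A_i|=0$ or $|N(b)\cap A_i|\geq d$. Then $d(G)\leq 18d$.
   Context: $d(G)=2e(G)/|V(G)|$ is the average degree and $N(b)$ the neighbourhood of $b$ in $G$. A graph is $C_4$-free if it contains no $4$-cycle as a subgraph. *)

(* Defs.v *)
From HB Require Import structures.
From mathcomp Require Import all_boot all_order all_algebra.
Set Implicit Arguments. Unset Strict Implicit. Unset Printing Implicit Defensive.
Import Order.TTheory GRing.Theory Num.Theory.

Definition simple_graph (T : finType) (e : rel T) : Prop :=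
  symmetric e /\ irreflexive e.

Definition nbhd (T : finType) (e : rel T) (v : T) : {set T} := [set x | e v x].

Definition edges (T : finType) (e : rel T) : {set {set T}} :=
  [set [set x; y] | x in T, y in T & e x y].

Definition avg_deg (R : numFieldType) (T : finType) (e : rel T) : R :=
  (2 * #|edges e|)%:R / #|T|%:R.

Definition C4_free (T : finType) (e : rel T) : Prop :=
  forall a b c d : T, uniq [:: a; b; c; d] ->
    ~ [&& e a b, e b c, e c d & e d a].

Definition bipartite_with (T : finType) (e : rel T) (A B : {set T}) : Prop :=
  [/\ A :|: B = [set: T], [disjoint A & B] &
      forall x y, e x y -> (x \in A) = (y \in B)].

(* Main.v *)
Require Import Defs.
From HB Require Import structures.
From mathcomp Require Import all_boot all_order all_algebra.
From mathcomp Require Import zify ring lra.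
Import Order.TTheory GRing.Theory Num.Theory.
Lemma card_offdiag (T : finType) (S : {set T}) :
  #|[set p in setX S S | p.1 != p.2]| = (#|S| * (#|S| - 1))%N.
Proof.
have H := cardsID [set p : T * T | p.1 == p.2] (setX S S).
have E1 : setX S S :&: [set p : T * T | p.1 == p.2] = (fun x => (x, x)) @: S.
  apply/setP => [[x y]]; rewrite !inE /=; apply/idP/imsetP.
    by case/andP=> /andP[xS _] /eqP <-; exists x.
  by case=> z zS [-> ->]; rewrite zS eqxx.
have E2 : [set p in setX S S | p.1 != p.2] = setX S S :\: [set p : T * T | p.1 == p.2].
  by apply/setP => p; rewrite !inE andbC.
rewrite E1 card_imset in H; last by move=> x y [].
rewrite cardsX -E2 in H. rewrite mulnBr muln1. lia.
Qed.

Lemma pair_count (T : finType) (e : rel T) (B Ai : {set T}) :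
  symmetric e -> irreflexive e -> C4_free e ->
  (\sum_(b in B) #|[set p in setX (nbhd e b :&: Ai) (nbhd e b :&: Ai) | p.1 != p.2]|
    <= #|[set p in setX Ai Ai | p.1 != p.2]|)%N.
Proof.
move=> esym eirr c4.
set Q := fun b => [set p in setX (nbhd e b :&: Ai) (nbhd e b :&: Ai) | p.1 != p.2].
set D := [set p in setX Ai Ai | p.1 != p.2].
have QD : forall b, Q b \subset D.
  move=> b; apply/subsetP => p; rewrite !inE => /andP[/andP[/andP[_ ->] /andP[_ ->]] ->].
  done.
have E : forall b, #|Q b| = (\sum_p (p \in Q b))%N.
  move=> b; rewrite -sum1_card big_mkcond /=; apply: eq_bigr => p _.
  by case: (p \in Q b).
under eq_bigr => b _ do rewrite E.
rewrite exchange_big /= -[X in (_ <= X)%N]sum1_card [X in (_ <= X)%N]big_mkcond /=.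
apply: leq_sum => p _.
case pD: (p \in D); last first.
  rewrite big1 // => b _.
  by case pQ: (p \in Q b) => //; move: (subsetP (QD b) p pQ); rewrite pD.
have -> : (\sum_(b in B) (p \in Q b) = #|[pred b | (b \in B) && (p \in Q b)]|)%N.
  rewrite -sum1_card big_mkcondr /=; apply: eq_bigr => b _.
  by case: (p \in Q b).
apply/card_le1_eqP => b b'; rewrite !inE /=.
case: p pD => x y /= _.
move=> /andP[_ /andP[/andP[/andP[bx _] /andP[by' _]] xy]].
move=> /andP[_ /andP[/andP[/andP[b'x _] /andP[b'y _]] _]].
apply/eqP; apply: contraT => bb'.
have nx : forall z, e z x -> x != z.
  by move=> z zx; apply: contraTneq zx => ->; rewrite eirr.
have ny : forall z, e z y -> y != z.
  by move=> z zy; apply: contraTneq zy => ->; rewrite eirr.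
exfalso; apply: (c4 x b y b').
  rewrite /= !inE !negb_or.
  rewrite (nx b bx) xy (nx b' b'x) /=.
  by rewrite eq_sym (ny b by') eq_sym bb' (ny b' b'y).
by rewrite (esym x b) bx by' (esym y b') b'y b'x.
Qed.

Lemma edges_bound (T : finType) (e : rel T) (A B : {set T}) :
  symmetric e -> bipartite_with e A B ->
  (#|edges e| <= \sum_(b in B) #|nbhd e b|)%N.
Proof.
move=> esym [AB _ bip].
set X := [set p : T * T | (p.1 \in B) && e p.1 p.2].
have -> : (\sum_(b in B) #|nbhd e b| = #|X|)%N.
  rewrite -sum1_card.
  rewrite (eq_bigr (fun b => \sum_x (e b x : nat))%N); last first.
    move=> b _; rewrite -sum1_card big_mkcond /=; apply: eq_bigr => x _.
    by rewrite inE; case: (e b x).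
  rewrite big_mkcond /= (eq_bigr (fun b => \sum_x ((b \in B) && e b x : nat))%N); last first.
    by move=> b _; case: (b \in B) => //=; rewrite big1.
  rewrite pair_big /= [RHS]big_mkcond /=; apply: eq_bigr => [[b x]] _ /=.
  by rewrite inE /=; case: ((b \in B) && e b x).
apply: (leq_trans _ (leq_imset_card (fun p : T * T => [set p.1; p.2]) X)).
apply: subset_leq_card; apply/subsetP => s.
rewrite /edges. move=> H. case/imset2P: H => x y _.
rewrite inE => exy ->.
have xT : x \in A :|: B by rewrite AB inE.
case xB: (x \in B).
  by apply/imsetP; exists (x, y) => //; rewrite inE /= xB.
move: xT; rewrite inE xB orbF => xA.
have yB : y \in B by rewrite -(bip x y exy).
apply/imsetP; exists (y, x); first by rewrite inE /= yB esym.
by rewrite /= setUC.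
Qed.

Lemma nbhd_split (T : finType) (e : rel T) (A B : {set T}) (P : {set {set T}}) b :
  bipartite_with e A B -> partition P A -> b \in B ->
  #|nbhd e b| = (\sum_(Ai in P) #|nbhd e b :&: Ai|)%N.
Proof.
move=> [AB dAB bip] pP bB.
have bA : (b \in A) = false by apply: (disjointFl dAB).
have E : #|nbhd e b| = (\sum_(x in A | e b x) 1)%N.
  rewrite -sum1_card; apply: eq_bigl => x; rewrite inE.
  case ebx: (e b x); rewrite ?andbF ?andbT //.
  have xB : (x \in B) = false by rewrite -(bip b x ebx).
  have : x \in A :|: B by rewrite AB inE.
  by rewrite inE xB orbF.
rewrite E (set_partition_big_cond _ pP) /=; apply: eq_bigr => Ai _.
by rewrite -sum1_card; apply: eq_bigl => x; rewrite !inE andbC.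
Qed.

Local Open Scope ring_scope.

Lemma part_bound (R : realFieldType) (d : R) (n : nat) (I : finType) (B : {set I}) (k : I -> nat) :
  3 <= d -> n%:R <= d ^+ 2 ->
  (forall x, x \in B -> k x = 0%N \/ d <= (k x)%:R) ->
  (\sum_(x in B) (k x * (k x - 1)) <= n * (n - 1))%N ->
  \sum_(x in B) (k x)%:R <= 9 * d * n%:R.
Proof.
move=> d3 nd hk hs.
have key : (d - 1) * \sum_(x in B) (k x)%:R <= \sum_(x in B) (k x * (k x - 1))%:R.
  rewrite mulr_sumr; apply: ler_sum => x xk.
  case: (hk x xk) => [-> | dx]; first by rewrite mulr0.
  have x1 : (1 <= k x)%N.
    have : (0 : R) < (k x)%:R by apply: lt_le_trans dx; apply: lt_le_trans d3.
    by rewrite ltr0n.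
  rewrite natrM natrB // mulrC; apply: ler_wpM2l; first by rewrite ler0n.
  by rewrite lerD2r.
have hs' : \sum_(x in B) (k x * (k x - 1))%:R <= (n * (n - 1))%:R :> R.
  by rewrite -natr_sum ler_nat.
have nn : (n * (n - 1))%:R <= n%:R * d ^+ 2 :> R.
  rewrite natrM; apply: ler_wpM2l; first by rewrite ler0n.
  apply: le_trans nd; rewrite ler_nat; exact: leq_subr.
set s := \sum_(x in B) (k x)%:R in key *.
have n0 : (0 : R) <= n%:R by rewrite ler0n.
have h1 : (d - 1) * s <= n%:R * d ^+ 2 by apply: le_trans key (le_trans hs' nn).
have h2 : n%:R * d ^+ 2 <= (d - 1) * (9 * d * n%:R).
  have d0 : 0 <= d by apply: le_trans d3.
  have h8 : 0 <= 8 * d - 9 by lra.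
  have := mulr_ge0 n0 (mulr_ge0 d0 h8).
  nra.
have dpos : 0 < d - 1 by rewrite subr_gt0; apply: lt_le_trans d3; rewrite ltr1n.
by rewrite -(ler_pM2l dpos); apply: le_trans h2.
Qed.

Local Open Scope ring_scope.

Theorem lemma18 (R : realFieldType) (d : R) (T : finType) (e : rel T)
    (A B : {set T}) (P : {set {set T}}) :
  3 <= d ->
  simple_graph e ->
  C4_free e ->
  bipartite_with e A B ->
  partition P A ->
  (forall Ai, Ai \in P -> #|Ai|%:R <= d ^+ 2) ->
  (forall b Ai, b \in B -> Ai \in P ->
     #|nbhd e b :&: Ai| = 0%N \/ d <= #|nbhd e b :&: Ai|%:R) ->
  avg_deg R e <= 18 * d.
Proof.
move=> d3 [esym eirr] c4 bip pP hsz hnb.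
have d0 : 0 <= d by apply: le_trans d3.
have hE := edges_bound _ _ _ _ esym bip.
have hN : (\sum_(b in B) #|nbhd e b| =
    \sum_(Ai in P) \sum_(b in B) #|nbhd e b :&: Ai|)%N.
  rewrite exchange_big /=; apply: eq_bigr => b bB; exact: (nbhd_split _ _ _ _ _ _ bip pP bB).
have hpart : forall Ai, Ai \in P ->
    \sum_(b in B) (#|nbhd e b :&: Ai|)%:R <= 9 * d * #|Ai|%:R :> R.
  move=> Ai PAi; apply: part_bound => //.
  - exact: hsz.
  - by move=> b bB; apply: hnb.
  - have := pair_count _ _ B Ai esym eirr c4.
    rewrite card_offdiag.
    by under eq_bigr => b _ do rewrite card_offdiag.
have hEr : (#|edges e|)%:R <= 9 * d * #|T|%:R :> R.
  apply: (@le_trans _ _ ((\sum_(Ai in P) \sum_(b in B) #|nbhd e b :&: Ai|)%N)%:R).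
    by rewrite ler_nat -hN.
  rewrite natr_sum.
  apply: (@le_trans _ _ (\sum_(Ai in P) 9 * d * #|Ai|%:R)).
    by apply: ler_sum => Ai PAi; rewrite natr_sum; apply: hpart.
  rewrite -mulr_sumr -natr_sum -(card_partition pP).
  apply: ler_wpM2l; first by apply: mulr_ge0 => //; lra.
  by rewrite ler_nat max_card.
rewrite /avg_deg.
have [T0 | Tpos] := eqVneq #|T| 0%N.
  by rewrite T0 invr0 mulr0; lra.
have Tp : (0 : R) < #|T|%:R by rewrite ltr0n lt0n.
rewrite ler_pdivrMr // natrM.
lra.
Qed.
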